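(* Let $Y:(0,\infty)\times(0,\infty)\times[0,1]\to(0,\infty)$, $(K,L,\lambda)\mapsto Y(K,L,\lambda)$, be a smooth (in particular twice continuously differentiable) function, viewed as a family of production functions indexed by the labor share $\lambda$, with constant returns to scale: $Y(cK,cL,\lambda)=c\,Y(K,L,\lambda)$ for all $c>0$, $K,L>0$, $\lambda\in[0,1]$. Define the wage $w(K,L,\lambda)=\lambda\,Y(K,L,\lambda)/L$, and let $k=K/L$ denote the capital-to-labor ratio. Call a wage-maximizing labor share any $\lambda^*\in[0,1]$ maximizing $\lambda\mapsto w(K,L,\lambda)$ over $[0,1]$, and call $w(K,L,\lambda^* )$ the maximum wage. Then: (a) The wage-maximizing labor share(s) and the maximum wage depend on $(K,L)$ only through the capital-to-labor ratio $k=K/L$. (b) Fix $(K,L)$. Suppose there exists at least one $\lambda\in(0,1)$ satisfying the first-order condition $\lambda=-1\big/\left(\partial \ln Y/\partial\lambda\right)$, where the derivative is evaluated at $(K,L,\lambda)$. If at every $\lambda\in(0,1)$ satisfying this first-order condition the second-order condition $\partial^2\ln Y/\partial\lambda^2<0$ holds, then the wage-maximizing labor share is unique and lies strictly between $0$ and $1$.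
   Context: Here $K$ is capital, $L$ labor, $Y$ output, and $\lambda$ the labor share of output; under constant returns to scale the wage is $w=\lambda\,(Y/L)$. The derivatives $\partial\ln Y/\partial\lambda$ and $\partial^2\ln Y/\partial\lambda^2$ are partial derivatives of $\ln Y(K,L,\lambda)$ with respect to $\lambda$ with $K,L$ held fixed. *)

(* Defs.v *)
From Stdlib Require Import Reals.
From Coquelicot Require Import Coquelicot.
Open Scope R_scope.

(* A family of production functions Y(K,L,lambda); we use a total function
   R -> R -> R -> R, only its values on (0,oo)x(0,oo)x[0,1] matter. *)
Definition prodfam := R -> R -> R -> R.

Definition positive_on_domain (Y : prodfam) : Prop :=
  forall K L lam, 0 < K -> 0 < L -> 0 <= lam <= 1 -> 0 < Y K L lam.

Definition CRS (Y : prodfam) : Prop :=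
  forall c K L lam, 0 < c -> 0 < K -> 0 < L -> 0 <= lam <= 1 ->
    Y (c * K) (c * L) lam = c * Y K L lam.

(* Regularity in lambda (consequence of smoothness of Y on its domain):
   for K, L > 0, lambda |-> Y K L lambda is continuous on [0,1]
   (within [0,1], i.e. one-sided at the endpoints) and infinitely
   differentiable on (0,1). *)
Definition smooth_in_lambda (Y : prodfam) : Prop :=
  forall K L, 0 < K -> 0 < L ->
    (forall lam, 0 <= lam <= 1 ->
       filterlim (Y K L) (within (fun x => 0 <= x <= 1) (locally lam))
                 (locally (Y K L lam))) /\
    (forall n lam, 0 < lam < 1 -> ex_derive_n (Y K L) n lam).

Definition wage (Y : prodfam) (K L lam : R) : R := lam * Y K L lam / L.

Definition is_wage_max (Y : prodfam) (K L lam : R) : Prop :=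
  0 <= lam <= 1 /\ forall mu, 0 <= mu <= 1 -> wage Y K L mu <= wage Y K L lam.

Definition dlnY (Y : prodfam) (K L lam : R) : R :=
  Derive (fun m => ln (Y K L m)) lam.

Definition d2lnY (Y : prodfam) (K L lam : R) : R :=
  Derive (fun m => Derive (fun m' => ln (Y K L m')) m) lam.

(* Main.v *)
Require Import Defs.
From Stdlib Require Import Reals Lra.
From Coquelicot Require Import Coquelicot.
Open Scope R_scope.

Lemma L_sign (f : R -> R) x d : is_derive f x d -> d < 0 ->
  exists del, 0 < del /\ (forall t, x < t < x + del -> f t < f x) /\
                        (forall t, x - del < t < x -> f x < f t).
Proof.
  intros Hd Hneg. apply is_derive_Reals in Hd.
  destruct (Hd (- d) ltac:(lra)) as [[del Hdel] H].
  exists del. split; [exact Hdel|]. split; intros t Ht.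
  - assert (Hh := H (t - x) ltac:(lra) ltac:(simpl; rewrite Rabs_right; lra)).
    replace (x + (t - x)) with t in Hh by ring.
    apply Rabs_def2 in Hh. destruct Hh as [Hh1 Hh2].
    assert (Hq : (f t - f x) / (t - x) < 0) by lra.
    destruct (Rlt_or_le (f t) (f x)) as [?|Hle]; [auto|].
    exfalso. assert (0 <= (f t - f x) / (t - x)).
    { apply Rdiv_le_0_compat; lra. } lra.
  - assert (Hh := H (t - x) ltac:(lra) ltac:(simpl; rewrite Rabs_left; lra)).
    replace (x + (t - x)) with t in Hh by ring.
    apply Rabs_def2 in Hh. destruct Hh as [Hh1 Hh2].
    assert (Hq : (f t - f x) / (t - x) < 0) by lra.
    destruct (Rlt_or_le (f x) (f t)) as [?|Hle]; [auto|].
    exfalso. assert (0 <= (f t - f x) / (t - x)).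
    { replace ((f t - f x) / (t - x)) with ((f x - f t) / (x - t)) by (field; lra).
      apply Rdiv_le_0_compat; lra. } lra.
Qed.

Lemma L_sign_pos (f : R -> R) x d : is_derive f x d -> 0 < d ->
  exists del, 0 < del /\ (forall t, x < t < x + del -> f x < f t) /\
                        (forall t, x - del < t < x -> f t < f x).
Proof.
  intros Hd Hp.
  assert (Hd' : is_derive (fun t => - f t) x (- d)) by (apply (is_derive_opp (fun t => f t)); exact Hd).
  destruct (L_sign _ _ _ Hd' ltac:(lra)) as [del [H0 [H1 H2]]].
  exists del; split; [auto|split]; intros t Ht; [apply H1 in Ht|apply H2 in Ht]; lra.
Qed.

Section Core.
Variables (g h dh : R -> R) (x0 : R).
Hypothesis Hg : forall t, 0 < t < 1 -> is_derive g t (h t).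
Hypothesis Hh : forall t, 0 < t < 1 -> is_derive h t (dh t).
Hypothesis Hx0 : 0 < x0 < 1.
Hypothesis Hz : h x0 = 0.
Hypothesis Hsoc : forall t, 0 < t < 1 -> h t = 0 -> dh t < 0.

Lemma g_cont t : 0 < t < 1 -> continuity_pt g t.
Proof. intros Ht. apply derivable_continuous_pt. exists (h t).
  apply is_derive_Reals, Hg, Ht. Qed.

Lemma h_cont t : 0 < t < 1 -> continuity_pt h t.
Proof. intros Ht. apply derivable_continuous_pt. exists (dh t).
  apply is_derive_Reals, Hh, Ht. Qed.

Lemma mono_dec a b : 0 < a -> a < b -> b < 1 -> (forall c, a < c < b -> h c < 0) -> g b < g a.
Proof.
  intros Ha Hab Hb Hc.
  destruct (MVT_cor2 g h a b Hab) as [c [Heq Hc']].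
  { intros c Hc'. apply is_derive_Reals, Hg; lra. }
  specialize (Hc c Hc'). assert (h c * (b - a) < 0).
  { apply Rmult_neg_pos; lra. } lra.
Qed.

Lemma mono_inc a b : 0 < a -> a < b -> b < 1 -> (forall c, a < c < b -> 0 < h c) -> g a < g b.
Proof.
  intros Ha Hab Hb Hc.
  destruct (MVT_cor2 g h a b Hab) as [c [Heq Hc']].
  { intros c Hc'. apply is_derive_Reals, Hg; lra. }
  specialize (Hc c Hc'). assert (0 < h c * (b - a)).
  { apply Rmult_lt_0_compat; lra. } lra.
Qed.

Lemma right_lower m eps : 0 < m < 1 -> h m <= 0 -> 0 < eps ->
  exists t, m < t < m + eps /\ t < 1 /\ g t < g m.
Proof.
  intros Hm Hhm He. destruct Hhm as [Hlt|Heq].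
  - destruct (L_sign g m (h m) (Hg m Hm) Hlt) as [del [Hd [H1 _]]].
    exists (m + Rmin (Rmin del eps) (1 - m) / 2).
    assert (Rmin (Rmin del eps) (1 - m) <= Rmin del eps) by apply Rmin_l.
    assert (Rmin (Rmin del eps) (1 - m) <= 1 - m) by apply Rmin_r.
    assert (Rmin del eps <= del) by apply Rmin_l.
    assert (Rmin del eps <= eps) by apply Rmin_r.
    assert (0 < Rmin (Rmin del eps) (1 - m)) by (repeat apply Rmin_pos; lra).
    repeat split; try lra. apply H1; lra.
  - destruct (L_sign h m (dh m) (Hh m Hm) (Hsoc m Hm Heq)) as [del [Hd [H1 _]]].
    set (r := Rmin (Rmin del eps) (1 - m)).
    assert (r <= Rmin del eps) by apply Rmin_l.
    assert (r <= 1 - m) by apply Rmin_r.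
    assert (Rmin del eps <= del) by apply Rmin_l.
    assert (Rmin del eps <= eps) by apply Rmin_r.
    assert (0 < r) by (repeat apply Rmin_pos; lra).
    exists (m + r / 2). repeat split; try lra.
    apply mono_dec; try lra. intros c Hc. rewrite <- Heq. apply H1; lra.
Qed.

Lemma left_lower m eps : 0 < m < 1 -> 0 <= h m -> 0 < eps ->
  exists t, m - eps < t < m /\ 0 < t /\ g t < g m.
Proof.
  intros Hm Hhm He. destruct Hhm as [Hlt|Heq].
  - destruct (L_sign_pos g m (h m) (Hg m Hm) Hlt) as [del [Hd [_ H1]]].
    set (r := Rmin (Rmin del eps) m).
    assert (r <= Rmin del eps) by apply Rmin_l.
    assert (r <= m) by apply Rmin_r.
    assert (Rmin del eps <= del) by apply Rmin_l.
    assert (Rmin del eps <= eps) by apply Rmin_r.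
    assert (0 < r) by (repeat apply Rmin_pos; lra).
    exists (m - r / 2). repeat split; try lra. apply H1; lra.
  - symmetry in Heq.
    destruct (L_sign h m (dh m) (Hh m Hm) (Hsoc m Hm Heq)) as [del [Hd [_ H1]]].
    set (r := Rmin (Rmin del eps) m).
    assert (r <= Rmin del eps) by apply Rmin_l.
    assert (r <= m) by apply Rmin_r.
    assert (Rmin del eps <= del) by apply Rmin_l.
    assert (Rmin del eps <= eps) by apply Rmin_r.
    assert (0 < r) by (repeat apply Rmin_pos; lra).
    exists (m - r / 2). repeat split; try lra.
    apply mono_inc; try lra. intros c Hc. rewrite <- Heq. apply H1; lra.
Qed.

Lemma zeros_unique a b : 0 < a -> a < b -> b < 1 -> h a = 0 -> h b = 0 -> False.
Proof.
  intros Ha Hab Hb Hha Hhb.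
  destruct (continuity_ab_min g a b ltac:(lra)) as [m [Hmin Hm]].
  { intros c Hc. apply g_cont; lra. }
  destruct (Rle_lt_or_eq_dec m b ltac:(lra)) as [Hmb|Hmb].
  - destruct (Rle_or_lt (h m) 0) as [Hle|Hgt].
    + destruct (right_lower m (b - m) ltac:(lra) Hle ltac:(lra)) as [t [Ht [_ Hg']]].
      specialize (Hmin t ltac:(lra)). lra.
    + assert (a < m).
      { destruct (Rle_lt_or_eq_dec a m ltac:(lra)) as [?|E]; auto. subst m. lra. }
      destruct (left_lower m (m - a) ltac:(lra) ltac:(lra) ltac:(lra)) as [t [Ht [_ Hg']]].
      specialize (Hmin t ltac:(lra)). lra.
  - subst m.
    destruct (left_lower b (b - a) ltac:(lra) ltac:(lra) ltac:(lra)) as [t [Ht [_ Hg']]].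
    specialize (Hmin t ltac:(lra)). lra.
Qed.

Lemma h_zero_iff t : 0 < t < 1 -> h t = 0 -> t = x0.
Proof.
  intros Ht Hht. destruct (Rtotal_order t x0) as [Hl|[E|Hr]]; auto; exfalso.
  - apply (zeros_unique t x0); lra.
  - apply (zeros_unique x0 t); lra.
Qed.

Lemma h_neg_right t : x0 < t < 1 -> h t < 0.
Proof.
  intros Ht. destruct (Rlt_or_le (h t) 0) as [?|Hle]; auto. exfalso.
  destruct Hle as [Hpos|E]; [|symmetry in E; apply h_zero_iff in E; lra].
  destruct (L_sign h x0 (dh x0) (Hh x0 Hx0) (Hsoc x0 Hx0 Hz)) as [del [Hd [H1 _]]].
  set (r := Rmin del (t - x0)).
  assert (r <= del) by apply Rmin_l. assert (r <= t - x0) by apply Rmin_r.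
  assert (0 < r) by (apply Rmin_pos; lra).
  assert (Hs : h (x0 + r / 2) < 0) by (rewrite <- Hz; apply H1; lra).
  destruct (Ranalysis5.IVT_interv h (x0 + r/2) t) as [z [Hz1 Hz2]]; try lra.
  { intros c Hc. apply h_cont; lra. }
  apply h_zero_iff in Hz2; lra.
Qed.

Lemma h_pos_left t : 0 < t < x0 -> 0 < h t.
Proof.
  intros Ht. destruct (Rlt_or_le 0 (h t)) as [?|Hle]; auto. exfalso.
  destruct Hle as [Hneg|E]; [|apply h_zero_iff in E; lra].
  destruct (L_sign h x0 (dh x0) (Hh x0 Hx0) (Hsoc x0 Hx0 Hz)) as [del [Hd [_ H1]]].
  set (r := Rmin del (x0 - t)).
  assert (r <= del) by apply Rmin_l. assert (r <= x0 - t) by apply Rmin_r.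
  assert (0 < r) by (apply Rmin_pos; lra).
  assert (Hs : 0 < h (x0 - r / 2)) by (rewrite <- Hz; apply H1; lra).
  destruct (Ranalysis5.IVT_interv h t (x0 - r/2)) as [z [Hz1 Hz2]]; try lra.
  { intros c Hc. apply h_cont; lra. }
  apply h_zero_iff in Hz2; lra.
Qed.

Lemma core_max t : 0 < t < 1 -> t <> x0 -> g t < g x0.
Proof.
  intros Ht Hne. destruct (Rtotal_order t x0) as [Hl|[E|Hr]]; [| contradiction |].
  - apply mono_inc; try lra. intros c Hc. apply h_pos_left; lra.
  - apply mono_dec; try lra. intros c Hc. apply h_neg_right; lra.
Qed.
End Core.

Lemma wage_scale (Y : prodfam) (Hcrs : CRS Y) K L lam : 0 < K -> 0 < L -> 0 <= lam <= 1 ->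
  wage Y K L lam = lam * Y (K / L) 1 lam.
Proof.
  intros HK HL Hl. unfold wage.
  replace (Y K L lam) with (Y (L * (K / L)) (L * 1) lam) by (f_equal; field; lra).
  rewrite Hcrs; try lra. field. lra. apply Rdiv_lt_0_compat; lra.
Qed.

Section B.
Variables (Y : prodfam) (K L : R).
Hypothesis Hpos : positive_on_domain Y.
Hypothesis Hsmooth : smooth_in_lambda Y.
Hypothesis HK : 0 < K.
Hypothesis HL : 0 < L.

Let y := Y K L.

Lemma y_der t : 0 < t < 1 -> ex_derive y t.
Proof. intros Ht. destruct (Hsmooth K L HK HL) as [_ Hn]. exact (Hn 1%nat t Ht). Qed.
Lemma y_der2 t : 0 < t < 1 -> ex_derive (Derive y) t.
Proof. intros Ht. destruct (Hsmooth K L HK HL) as [_ Hn]. exact (Hn 2%nat t Ht). Qed.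
Lemma y_pos t : 0 < t < 1 -> 0 < y t.
Proof. intros Ht. apply Hpos; lra. Qed.

Lemma dlnY_eq t : 0 < t < 1 -> dlnY Y K L t = Derive y t / y t.
Proof.
  intros Ht. unfold dlnY. apply is_derive_unique.
  assert (H1 := y_der t Ht). assert (H2 := y_pos t Ht).
  auto_derive. auto. rewrite Rmult_1_l. reflexivity.
Qed.

Lemma dlnY_der t : 0 < t < 1 -> ex_derive (dlnY Y K L) t.
Proof.
  intros Ht. apply (ex_derive_ext_loc (fun u => Derive y u / y u)).
  - apply (locally_open (fun u => 0 < u /\ u < 1)).
    + apply open_and. apply open_gt. apply open_lt.
    + intros u Hu. symmetry. apply dlnY_eq. exact Hu.
    + exact Ht.
  - assert (H1 := y_der t Ht). assert (H2 := y_pos t Ht). assert (H3 := y_der2 t Ht).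
    auto_derive. repeat split; auto. lra.
Qed.

Definition hh t := dlnY Y K L t + / t.
Definition dhh t := d2lnY Y K L t + (- 1 / t ^ 2).
Definition gg t := ln (wage Y K L t).

Lemma hh_der t : 0 < t < 1 -> is_derive hh t (dhh t).
Proof.
  intros Ht. unfold hh, dhh. apply (is_derive_plus (dlnY Y K L) (fun t => / t)).
  - unfold d2lnY. apply Derive_correct. apply dlnY_der. exact Ht.
  - auto_derive. lra. field. lra.
Qed.

Lemma gg_der t : 0 < t < 1 -> is_derive gg t (hh t).
Proof.
  intros Ht. unfold gg, hh, wage. rewrite dlnY_eq by exact Ht.
  assert (H1 := y_der t Ht). assert (H2 := y_pos t Ht). unfold y in *.
  auto_derive.
  - repeat split; auto. apply Rdiv_lt_0_compat; [apply Rmult_lt_0_compat|]; lra.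
  - change (fun x : R => Y K L x) with (Y K L). field. repeat split; lra.
Qed.

Lemma foc_iff t : 0 < t < 1 -> (t = -1 / dlnY Y K L t <-> hh t = 0).
Proof.
  intros Ht. unfold hh. split; intros H.
  - destruct (Req_dec (dlnY Y K L t) 0) as [E|E].
    + rewrite E in H. unfold Rdiv in H. rewrite Rinv_0 in H. lra.
    + rewrite H at 2. field. auto.
  - assert (E : dlnY Y K L t = - / t) by lra. rewrite E. field. lra.
Qed.

Lemma wage_pos t : 0 < t <= 1 -> 0 < wage Y K L t.
Proof. intros Ht. unfold wage. apply Rdiv_lt_0_compat; [apply Rmult_lt_0_compat|]; try lra.
  apply Hpos; lra. Qed.

Lemma partb : (exists lam, 0 < lam < 1 /\ lam = -1 / dlnY Y K L lam) ->
     (forall lam, 0 < lam < 1 -> lam = -1 / dlnY Y K L lam -> d2lnY Y K L lam < 0) ->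
     exists lam, 0 < lam < 1 /\ is_wage_max Y K L lam /\
       forall mu, is_wage_max Y K L mu -> mu = lam.
Proof.
  intros [x0 [Hx0 Hfoc]] Hsoc.
  assert (Hz : hh x0 = 0) by (apply foc_iff; auto).
  assert (Hsoc' : forall t, 0 < t < 1 -> hh t = 0 -> dhh t < 0).
  { intros t Ht Ht0. unfold dhh. apply foc_iff in Ht0; auto.
    specialize (Hsoc t Ht Ht0). assert (0 < 1 / t ^ 2).
    { apply Rdiv_lt_0_compat; [lra|]. apply pow_lt; lra. } lra. }
  assert (Hint : forall mu, 0 < mu < 1 -> mu <> x0 -> wage Y K L mu < wage Y K L x0).
  { intros mu Hmu Hne. apply ln_lt_inv; try (apply wage_pos; lra).
    apply (core_max gg hh dhh x0 gg_der hh_der Hx0 Hz Hsoc' mu Hmu Hne). }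
  assert (S : forall mu, 0 <= mu <= 1 -> mu <> x0 -> wage Y K L mu < wage Y K L x0).
  { intros mu Hmu Hne.
    destruct (Rle_lt_or_eq_dec 0 mu ltac:(lra)) as [Hm0|Hm0].
    2:{ subst mu. unfold wage. rewrite Rmult_0_l. unfold Rdiv. rewrite Rmult_0_l.
        apply wage_pos. lra. }
    destruct (Rle_lt_or_eq_dec mu 1 ltac:(lra)) as [Hm1|Hm1].
    { apply Hint; lra. }
    subst mu.
    set (d := (x0 + 1) / 2).
    assert (Hwd : wage Y K L d < wage Y K L x0) by (apply Hint; unfold d; lra).
    set (eps := wage Y K L x0 - wage Y K L d).
    assert (He : 0 < eps) by (unfold eps; lra).
    set (e1 := L * eps / 2).
    assert (He1 : 0 < e1) by (unfold e1; apply Rdiv_lt_0_compat; [apply Rmult_lt_0_compat|]; lra).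
    destruct (Hsmooth K L HK HL) as [Hc _].
    assert (Hb := Hc 1 ltac:(lra) (fun v => ball (Y K L 1) e1 v) (locally_ball (Y K L 1) (mkposreal e1 He1))).
    destruct Hb as [del Hdel].
    assert (Hy1 : 0 < Y K L 1) by (apply Hpos; lra).
    set (r := Rmin (Rmin del (e1 / Y K L 1)) (1 - d)).
    assert (r <= Rmin del (e1 / Y K L 1)) by apply Rmin_l.
    assert (r <= 1 - d) by apply Rmin_r.
    assert (Rmin del (e1 / Y K L 1) <= del) by apply Rmin_l.
    assert (Hre : Rmin del (e1 / Y K L 1) <= e1 / Y K L 1) by apply Rmin_r.
    assert (0 < r).
    { unfold r. repeat apply Rmin_pos; try (unfold d; lra). apply cond_pos.
      apply Rdiv_lt_0_compat; lra. }
    assert (Hd : 0 < d < 1) by (unfold d; lra).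
    set (u := 1 - r / 2).
    assert (Hu : d < u < 1) by (unfold u; lra).
    assert (Hball : Rabs (Y K L u - Y K L 1) < e1).
    { assert (HH := Hdel u). simpl in HH.
      unfold ball in HH; simpl in HH; unfold AbsRing_ball, abs, minus, plus, opp in HH; simpl in HH.
      apply HH.
      - unfold u. rewrite Rabs_left; lra.
      - lra. }
    assert (Hwu : wage Y K L u < wage Y K L d).
    { apply ln_lt_inv; try (apply wage_pos; lra).
      apply (mono_dec gg hh gg_der d u); try lra.
      intros c Hc'. apply (h_neg_right gg hh dhh x0 gg_der hh_der Hx0 Hz Hsoc'). unfold d in *; lra. }
    assert (Hry : r * Y K L 1 <= e1).
    { apply Rle_trans with (e1 / Y K L 1 * Y K L 1).
      - apply Rmult_le_compat_r; lra.
      - right. field. lra. }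
    apply Rabs_def2 in Hball.
    assert (Heq : eps * L = 2 * e1) by (unfold e1; field; lra).
    assert (Heps: eps = wage Y K L x0 - wage Y K L d) by reflexivity.
    unfold wage in *.
    assert (Y K L 1 - u * Y K L u < 2 * e1).
    { replace (Y K L 1 - u * Y K L u) with (u * (Y K L 1 - Y K L u) + (r/2) * Y K L 1) by (unfold u; ring).
      assert (u * (Y K L 1 - Y K L u) < e1).
      { destruct (Rle_or_lt 0 (Y K L 1 - Y K L u)) as [Ha|Ha].
        - assert (u * (Y K L 1 - Y K L u) <= 1 * (Y K L 1 - Y K L u)) by (apply Rmult_le_compat_r; lra). lra.
        - assert (u * (Y K L 1 - Y K L u) < 0) by (apply Rmult_pos_neg; lra). lra. } lra. }
    assert (Hlt : Y K L 1 < u * Y K L u + eps * L) by lra.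
    apply Rmult_lt_compat_r with (r := / L) in Hlt; [|apply Rinv_0_lt_compat; lra].
    replace ((u * Y K L u + eps * L) * / L) with (u * Y K L u / L + eps) in Hlt by (field; lra).
    unfold Rdiv in *. lra. }
  exists x0. split; [exact Hx0|]. split.
  - split; [lra|]. intros mu Hmu. destruct (Req_dec mu x0) as [E|E].
    + subst; lra.
    + left. apply S; auto.
  - intros mu [Hmu Hmax]. destruct (Req_dec mu x0) as [E|E]; auto. exfalso.
    specialize (S mu Hmu E). specialize (Hmax x0 ltac:(lra)). lra.
Qed.
End B.

Theorem theorem1 (Y : prodfam)
  (Hpos : positive_on_domain Y) (Hcrs : CRS Y) (Hsmooth : smooth_in_lambda Y) :
  (* (a) maximizers and maximum wage depend only on k = K/L *)
  (forall K L K' L', 0 < K -> 0 < L -> 0 < K' -> 0 < L' -> K / L = K' / L' ->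
     (forall lam, is_wage_max Y K L lam <-> is_wage_max Y K' L' lam) /\
     (forall lam lam', is_wage_max Y K L lam -> is_wage_max Y K' L' lam' ->
        wage Y K L lam = wage Y K' L' lam'))
  /\
  (* (b) FOC solvable + SOC at every FOC point => unique interior maximizer *)
  (forall K L, 0 < K -> 0 < L ->
     (exists lam, 0 < lam < 1 /\ lam = -1 / dlnY Y K L lam) ->
     (forall lam, 0 < lam < 1 -> lam = -1 / dlnY Y K L lam -> d2lnY Y K L lam < 0) ->
     exists lam, 0 < lam < 1 /\ is_wage_max Y K L lam /\
       forall mu, is_wage_max Y K L mu -> mu = lam).
Proof.
  split.
  - intros K L K' L' HK HL HK' HL' Hk.
    assert (Hw : forall lam, 0 <= lam <= 1 -> wage Y K L lam = wage Y K' L' lam).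
    { intros lam Hl. rewrite !wage_scale; auto. rewrite Hk. reflexivity. }
    split.
    + intros lam. unfold is_wage_max. split; intros [Hl Hm]; split; auto;
        intros mu Hmu; specialize (Hm mu Hmu); rewrite ?Hw in *; auto;
        rewrite <- ?Hw in *; auto.
    + intros lam lam' [Hl Hm] [Hl' Hm'].
      specialize (Hm lam' Hl'). specialize (Hm' lam Hl).
      rewrite Hw in Hm by auto. rewrite Hw in Hm by auto. rewrite Hw by auto. lra.
  - intros K L HK HL. apply partb; auto.
Qed.
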